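(* Let $0<t_0\le 1/\max_j|\bar c_j|$. Then for every $v\in\mathrm{W}^{2,p}_0([0,t_0],\mathbb{C}^m)$ the function $x:[0,t_0]\to X^i$ given by $x(t)=(P^i_+S_t-P^i_-R_t)v$, i.e. \[ x(t)(s)=P^i_+\bigl(\hat v_j(t-\tfrac{1-s}{|\bar c_j|})\bigr)_{j=1}^m-P^i_-\bigl(\hat v_j(t-\tfrac{s}{|\bar c_j|})\bigr)_{j=1}^m,\quad s\in[0,1], \] ($\hat v$ the extension of $v$ by $0$ to $\mathbb{R}$) is a classical solution of the boundary control system \[ \dot x(t)=A_m^i x(t),\quad L^i x(t)=v(t)\quad(0\le t\le t_0),\qquad x(0)=0. \]
   Context: Fix $p\in[1,\infty)$, $m\in\mathbb{N}$, $X^i=\mathrm{L}^p([0,1],\mathbb{C}^m)$. Let $\bar c_1,\dots,\bar c_m$ be nonzero real numbers, $\bar C=\operatorname{diag}(\bar c_1,\dots,\bar c_m)$, and $P^i_\pm$ the diagonal coordinate projections onto the coordinates $j$ with $\pm\bar c_j>0$. $A_m^i f=\bar C f'$ with $D(A_m^i)=\mathrm{W}^{1,p}([0,1],\mathbb{C}^m)$, and $L^i:D(A^i_m)\to\mathbb{C}^m$, $L^if=f(1)-f(0)$. A classical solution is a function $x\in\mathrm{C}^1([0,t_0],X^i)$ with $x(t)\in D(A^i_m)$ for all $t$, $t\mapsto A^i_mx(t)$ continuous, satisfying the stated equations. *)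

(* Defs.v *)
From HB Require Import structures.
From mathcomp Require Import all_boot all_order all_algebra.
From mathcomp Require Import all_classical all_reals all_analysis.
From mathcomp Require complex.
Import complex.ComplexField.
Set Implicit Arguments. Unset Strict Implicit. Unset Printing Implicit Defensive.
Import Order.TTheory GRing.Theory Num.Theory.
Import numFieldNormedType.Exports.
Local Open Scope classical_set_scope.
Local Open Scope ring_scope.

(* Complex numbers C = R[i] (mathcomp real_closed complex), C^m = 'I_m -> C.
   Only the real-linear structure of C is used (the c_j are real).          *)
Notation cplx R := (complex.complex R).
Definition rC (R : realType) (r : R) : cplx R := complex.Complex r 0.

Definition cmnorm (R : realType) (m : nat) (z : 'I_m -> cplx R) : R :=
  Num.sqrt (\sum_(j < m) (complex.Re (z j) ^+ 2 + complex.Im (z j) ^+ 2)).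

Definition Icc (R : realType) (a b : R) : set R := [set s | a <= s <= b].

Definition cm_measurable (R : realType) (m : nat) (D : set R)
  (f : R -> 'I_m -> cplx R) : Prop :=
  forall j, measurable_fun D (fun s => complex.Re (f s j)) /\
            measurable_fun D (fun s => complex.Im (f s j)).

Definition Lp_pow (R : realType) (m : nat) (p : R) (D : set R)
  (f : R -> 'I_m -> cplx R) : \bar R :=
  (\int[@lebesgue_measure R]_(s in D) ((cmnorm (f s)) `^ p)%:E)%E.

Definition memLp (R : realType) (m : nat) (p : R) (D : set R)
  (f : R -> 'I_m -> cplx R) : Prop :=
  cm_measurable D f /\ (Lp_pow p D f < +oo)%E.

Definition cintegral (R : realType) (m : nat) (D : set R)
  (f : R -> 'I_m -> cplx R) : 'I_m -> cplx R :=
  fun j => complex.Complex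
    (Rintegral (@lebesgue_measure R) D (fun s => complex.Re (f s j)))
    (Rintegral (@lebesgue_measure R) D (fun s => complex.Im (f s j))).

(* F(s) = F(a) + \int_a^s G  for all s in [a,b]:  F is the (absolutely
   continuous) primitive of G on [a,b], i.e. G is the weak derivative of F *)
Definition primitive_on (R : realType) (m : nat) (a b : R)
  (F G : R -> 'I_m -> cplx R) : Prop :=
  forall s, a <= s <= b -> F s = (fun j => F a j + cintegral (Icc a s) G j).

(* v in W^{2,p}_0([0,t0], C^m): v = \int_0 v1, v1 = \int_0 v2 with v2 in L^p,
   and v, v' vanish at both endpoints (v is its continuous representative) *)
Definition W2p0 (R : realType) (m : nat) (p t0 : R)
  (v : R -> 'I_m -> cplx R) : Prop :=
  exists v1 v2 : R -> 'I_m -> cplx R,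
    memLp p (Icc 0 t0) v2 /\
    (forall s, 0 <= s <= t0 ->
       v1 s = cintegral (Icc 0 s) v2 /\ v s = cintegral (Icc 0 s) v1) /\
    v t0 = 0 /\ v1 t0 = 0.

Definition vhat (R : realType) (m : nat) (t0 : R) (v : R -> 'I_m -> cplx R)
  : R -> 'I_m -> cplx R :=
  fun r => if 0 <= r <= t0 then v r else 0.

Definition xsol (R : realType) (m : nat) (c : 'I_m -> R) (t0 : R)
  (v : R -> 'I_m -> cplx R) : R -> R -> 'I_m -> cplx R :=
  fun t s j =>
    (if 0 < c j then vhat t0 v (t - (1 - s) / `|c j|) j else 0)
    - (if c j < 0 then vhat t0 v (t - s / `|c j|) j else 0).

(* Classical solution on [0,t0] of  x' = A_m x,  L x = v,  x(0) = 0,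
   with X = L^p([0,1],C^m), A_m f = C f' on D(A_m) = W^{1,p}([0,1],C^m),
   L f = f(1) - f(0).  For each t, F t is the W^{1,p} (absolutely continuous)
   representative of x(t) and G t its derivative, so A_m x(t) = C (G t).
   x is C^1 into X with derivative A_m x(t), and t |-> A_m x(t) is continuous. *)
Definition classical_solution (R : realType) (m : nat) (p : R)
  (c : 'I_m -> R) (t0 : R) (v : R -> 'I_m -> cplx R)
  (x : R -> R -> 'I_m -> cplx R) : Prop :=
  (forall t, Icc 0 t0 t -> memLp p (Icc 0 1) (x t)) /\
  exists F G : R -> R -> 'I_m -> cplx R,
    (forall t, Icc 0 t0 t ->
       memLp p (Icc 0 1) (G t) /\ primitive_on 0 1 (F t) (G t) /\
       {ae @lebesgue_measure R, forall s, Icc 0 1 s -> F t s = x t s}) /\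
    (forall t, Icc 0 t0 t ->
       (Lp_pow p (Icc 0 1)
          (fun s j => rC (t' - t)^-1 * (x t' s j - x t s j) - rC (c j) * G t s j)
        @[t' --> within (Icc 0 t0) t^'] --> 0%E)) /\
    (forall t, Icc 0 t0 t ->
       (Lp_pow p (Icc 0 1) (fun s j => rC (c j) * G t' s j - rC (c j) * G t s j)
        @[t' --> within (Icc 0 t0) (nbhs t)] --> 0%E)) /\
    (forall t, Icc 0 t0 t -> (fun j => F t 1 j - F t 0 j) = v t) /\
    Lp_pow p (Icc 0 1) (x 0) = 0%E.

(* Main.v *)
Require Import Defs.
From HB Require Import structures.
From mathcomp Require Import all_boot all_order all_algebra.
From mathcomp Require Import all_classical all_reals all_analysis.
From mathcomp Require complex.
From mathcomp Require Import measurable_realfun ring lra.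
Import complex.ComplexField.
Import Order.TTheory GRing.Theory Num.Theory.
Import numFieldNormedType.Exports.
Local Open Scope classical_set_scope.
Local Open Scope ring_scope.
Ltac isolve := repeat match goal with
 | |- _ /\ _ => split
 | |- is_true (_ && _) => apply/andP; split
 | H : _ /\ _ |- _ => destruct H
 | H : is_true (_ && _) |- _ => move/andP: H => [? ?]
 | |- _ -> _ => intro
 end; try lra.

Set Implicit Arguments.
Section S.
Context {R : realType}.
Notation mu := (@lebesgue_measure R).

Lemma IccE (a b : R) : Icc a b = `[a, b]%classic.
Proof. by apply/seteqP; split=> x; rewrite /Icc /= in_itv. Qed.

Lemma hh_repr (g h : R -> R) t0 : 0 <= t0 ->
  (forall s, 0 <= s <= t0 -> h s = \int[mu]_(u in Icc 0 s) g u) -> h t0 = 0 ->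
  forall y, (if 0 <= y <= t0 then h y else 0) =
     \int[mu]_(u in `]-oo, y]) (g \_ `[0,t0]) u.
Proof.
move=> t00 hE ht0 y; rewrite -Rintegral_mkcondr.
have [y0|y0] := ltP y 0.
  rewrite /=.
  rewrite (_ : _ `&` _ = set0) ?Rintegral_set0//.
  apply/seteqP; split=> x //=; rewrite !in_itv/= => -[xy /andP[x0 _]]; lra.
have [yt|yt] := leP y t0.
  rewrite /= hE ?y0 ?yt// IccE; congr Rintegral.
  by apply/seteqP; split=> x /=; rewrite !in_itv/=; isolve.
rewrite /=.
transitivity (h t0); first by rewrite ht0.
rewrite hE ?lexx ?t00// IccE; congr Rintegral.
by apply/seteqP; split=> x /=; rewrite !in_itv/=; isolve.
Qed.


Lemma restrT_int (g : R -> R) (D : set R) : measurable D ->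
  mu.-integrable D (EFin \o g) -> mu.-integrable setT (EFin \o (g \_ D)).
Proof.
move=> mD ig; rewrite -restrict_EFin; apply/integrable_restrict => //.
by rewrite setTI.
Qed.

Lemma hh_unif (g : R -> R) t0 : mu.-integrable `[0,t0] (EFin \o g) ->
  forall e : R, 0 < e -> exists2 d : R, 0 < d & forall a b : R, `|a - b| < d ->
   `|\int[mu]_(u in `]-oo, a]) (g \_ `[0,t0]) u
     - \int[mu]_(u in `]-oo, b]) (g \_ `[0,t0]) u| < e.
Proof.
move=> ig e e0.
have iT := restrT_int (measurable_itv `[0, t0]) ig.
have [d [d0 hd]] := integral_normr_continuous iT e0.
exists d => // a b.
wlog ab : a b / a <= b.
  move=> H; have [/H//|ba] := leP a b.
  by move=> ad; rewrite distrC; apply: H; [exact: ltW|rewrite distrC].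
move=> abd; rewrite distrC.
rewrite (@Rintegral_itvB _ _ -oo%O (BRight b) a)//; last first.
  exact: integrableS iT.
rewrite (le_lt_trans (le_normr_Rintegral _ _))//.
  apply: integrableS iT => //.
apply: hd => //.
rewrite [X in (X < _)%E]lebesgue_measure_itv/=.
case: ifP => _; last by rewrite lte_fin.
rewrite -EFinD lte_fin; rewrite distrC ger0_norm ?subr_ge0 in abd; lra.
Qed.


Lemma ext0E (kk : R -> R) (t0 : R) : (forall r, ~ (0 <= r <= t0) -> kk r = 0) ->
  kk \_ `[0,t0] = kk.
Proof.
move=> k0; apply/funext => r; rewrite patchE; case: ifPn => //.
rewrite notin_setE /= in_itv /= => H; by rewrite k0.
Qed.

Lemma FTC_pt (kk : R -> R) (t0 x : R) : continuous kk ->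
  (forall r, ~ (0 <= r <= t0) -> kk r = 0) ->
  is_derive x 1 (fun y => \int[mu]_(u in `]-oo, y]) (kk \_ `[0,t0]) u) (kk x).
Proof.
move=> ck k0; rewrite ext0E//.
have ik : mu.-integrable `[0,t0] (EFin \o kk).
  apply: continuous_compact_integrable; first exact: segment_compact.
  exact: continuous_subspaceT.
have iu : mu.-integrable `]-oo, x + 1] (EFin \o kk).
  rewrite -(@ext0E kk t0 k0) -restrict_EFin; apply/integrable_restrict => //=; try exact: measurable_itv.
  apply: integrableS ik => //; first by apply: measurableI; exact: measurable_itv.
have xu : x < x + 1 by lra.
have [d1 d2] := @continuous_FTC1 R kk -oo%O x (x + 1) xu iu (ltNyr _) (ck x).
rewrite -d2 derive1E; exact: derivableP d1.
Qed.


Lemma mvt_any (W w : R -> R) (b h : R) : (forall y : R, is_derive y 1 W (w y)) ->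
  exists2 z, `|z - b| <= `|h| & W (b + h) - W b = w z * h.
Proof.
move=> dW.
have cW : forall a c : R, {within `[a, c], continuous W}.
  move=> a c; apply: derivable_within_continuous => y _.
  by have dWy := dW y; apply: ex_derive.
have [h0|h0] := leP 0 h.
  have [z zi ->] := @MVT_segment R W w b (b + h) (ler_wpDr h0 (lexx b))
    (fun y _ => dW y) (cW _ _).
  exists z; last by congr (_ * _); ring.
  move: zi; rewrite in_itv/= => /andP[z1 z2].
  rewrite !ger0_norm//; lra.
have bh : b + h <= b by lra.
have [z zi E] := @MVT_segment R W w (b + h) b bh
    (fun y _ => dW y) (cW _ _).
exists z.
  move: zi; rewrite in_itv/= => /andP[z1 z2].
  rewrite (ltr0_norm h0) ler0_norm; lra.
have -> : W (b + h) - W b = - (W b - W (b + h)) by ring.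
rewrite E; ring.
Qed.

Lemma dq_est (W w : R -> R) : (forall y : R, is_derive y 1 W (w y)) ->
  (forall e : R, 0 < e -> exists2 d : R, 0 < d & forall a b : R,
     `|a - b| < d -> `|w a - w b| < e) ->
  forall e : R, 0 < e -> exists2 d : R, 0 < d & forall b h : R, h != 0 ->
    `|h| < d -> `|h^-1 * (W (b + h) - W b) - w b| <= e.
Proof.
move=> dW uw e e0; have [d d0 hd] := uw e e0.
exists d => // b h h0 hd'.
have [z zb ->] := @mvt_any W w b h dW.
rewrite mulrC mulfK//; apply: ltW; apply: hd; exact: le_lt_trans zb hd'.
Qed.

End S.
Section L.
Context {R : realType}.
Notation mu := (@lebesgue_measure R).

Lemma cmnorm_le (m : nat) (z : 'I_m -> cplx R) (e : R) : 0 <= e ->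
  (forall j, `|complex.Re (z j)| <= e /\ `|complex.Im (z j)| <= e) ->
  cmnorm z <= (2 * m%:R + 1) * e.
Proof.
move=> e0 hz; rewrite /cmnorm.
have K0 : 0 <= (2 * m%:R + 1) * e :> R by apply: mulr_ge0 => //; lra.
rewrite -(ger0_norm K0) -sqrtr_sqr ler_sqrt ?sqr_ge0//.
apply: (@le_trans _ _ (\sum_(j < m) (e ^+ 2 + e ^+ 2))).
  apply: ler_sum => j _; have [h1 h2] := hz j.
  have a1 : complex.Re (z j) ^+ 2 <= e ^+ 2.
    by rewrite -real_normK ?num_real// lerXn2r// ?nnegrE.
  have a2 : complex.Im (z j) ^+ 2 <= e ^+ 2.
    by rewrite -real_normK ?num_real// lerXn2r// ?nnegrE.
  lra.
rewrite sumr_const card_ord.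
have m0 : 0 <= m%:R :> R by [].
rewrite -mulr_natr; nra.
Qed.

Lemma powR_le_id (x p : R) : 0 <= x <= 1 -> 1 <= p -> x `^ p <= x.
Proof.
move=> /andP[x0 x1] p1; have [->|xn0] := eqVneq x 0.
  by rewrite powR0//; lra.
rewrite -{2}(powRr1 x0); apply: ger_powR => //.
by rewrite x1 andbT lt0r xn0.
Qed.

Lemma cm_meas_pow (m : nat) (D : set R) (f : R -> 'I_m -> cplx R) (p : R) :
  cm_measurable D f ->
  measurable_fun D (EFin \o (fun s => (cmnorm (f s)) `^ p)).
Proof.
move=> mf; apply/measurable_EFinP.
apply: (measurableT_comp (measurable_powR p)).
apply: (measurableT_comp (continuous_measurable_fun (@sqrt_continuous R))).
apply: measurable_sum => j; have [h1 h2] := mf j.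
by apply: measurable_funD; apply: measurable_funX.
Qed.



Lemma Icc_meas (a b : R) : measurable (Icc a b).
Proof. by rewrite IccE. Qed.

Lemma mu_Icc01 : mu (Icc 0 1) = 1%E.
Proof. by rewrite IccE lebesgue_measure_itv/= lte01 oppr0 adde0. Qed.

Lemma Lp_bound (m : nat) (f : R -> 'I_m -> cplx R) (p e : R) : 0 <= p -> 0 <= e ->
  cm_measurable (Icc 0 1) f ->
  (forall s, Icc 0 1 s -> forall j,
     `|complex.Re (f s j)| <= e /\ `|complex.Im (f s j)| <= e) ->
  (0 <= Lp_pow p (Icc 0 1) f <= (((2 * m%:R + 1) * e) `^ p)%:E)%E.
Proof.
move=> p0 e0 mf hf; apply/andP; split.
  by apply: integral_ge0 => s _; rewrite lee_fin powR_ge0.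
rewrite /Lp_pow.
have -> : ((((2 * m%:R + 1) * e) `^ p)%:E =
   \int[mu]_(s in Icc 0 1) (((2 * m%:R + 1) * e) `^ p)%:E)%E.
  rewrite integral_cst; last by rewrite IccE.
  by rewrite IccE [X in (_ * X)%E]lebesgue_measure_itv/= lte01 oppr0 adde0 mule1.
apply: ge0_le_integral => //.
- by rewrite IccE.
- by move=> s _; rewrite lee_fin powR_ge0.
- exact: cm_meas_pow.
- move=> s hs; rewrite lee_fin; apply: ge0_ler_powR => //.
  + by rewrite nnegrE sqrtr_ge0.
  + by rewrite nnegrE; apply: mulr_ge0 => //; lra.
  + by apply: cmnorm_le => //; exact: hf.
Qed.


Lemma Lp_cvg0 (m : nat) (p : R) (F : set_system R) (FF : Filter F)
  (f : R -> R -> 'I_m -> cplx R) : 1 <= p ->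
  (\forall t \near F, cm_measurable (Icc 0 1) (f t)) ->
  (forall e : R, 0 < e -> \forall t \near F, forall s, Icc 0 1 s -> forall j,
     `|complex.Re (f t s j)| <= e /\ `|complex.Im (f t s j)| <= e) ->
  Lp_pow p (Icc 0 1) (f t) @[t --> F] --> 0%E.
Proof.
move=> p1 mf hb.
have p0 : 0 <= p by lra.
have K0 : 0 < 2 * m%:R + 1 :> R by have : 0 <= m%:R :> R by []; lra.
apply/fine_cvgP; split.
  apply: filterS2 mf (hb 1 ltr01) => t mft hbt.
  have /andP[a b] := @Lp_bound m (f t) p 1 p0 ler01 mft hbt.
  by rewrite ge0_fin_numE// (le_lt_trans b) ?ltry.
apply/cvgrPdist_le => eps eps0.
have [eta [eta0 [eta1 etae]]] : exists eta : R, 0 < eta /\ eta <= 1 /\ eta <= eps.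
  by have [e1|e1] := leP eps 1; [exists eps | exists 1]; split => //; lra.
have e0' : 0 < eta / (2 * m%:R + 1) by apply: divr_gt0.
apply: filterS2 mf (hb _ e0') => t mft hbt.
have /andP[a b] := @Lp_bound m (f t) p _ p0 (ltW e0') mft hbt.
move: b; rewrite mulrC divfK ?gt_eqF// => b.
have fin : Lp_pow p (Icc 0 1) (f t) \is a fin_num.
  by rewrite ge0_fin_numE// (le_lt_trans b) ?ltry.
rewrite sub0r normrN ger0_norm ?fine_ge0//.
rewrite -lee_fin fineK// (le_trans b)// lee_fin.
apply: (le_trans _ etae); apply: powR_le_id p1.
by rewrite (ltW eta0) eta1.
Qed.


Lemma bounded_ext (k : R -> R) (t0 : R) : 0 <= t0 -> continuous k ->
  (forall r, ~ (0 <= r <= t0) -> k r = 0) -> exists M : R, forall r, `|k r| <= M.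
Proof.
move=> t00 ck k0.
have ck' : {within `[0, t0], continuous k} := continuous_subspaceT ck.
have [c1 _ h1] := EVT_max t00 ck'; have [c2 _ h2] := EVT_min t00 ck'.
exists (`|k c1| + `|k c2|) => r.
have := ler_norm (k c1); have := ler_norm (- k c2); rewrite normrN => a1 a2.
have a3 := normr_ge0 (k c1); have a4 := normr_ge0 (k c2).
have [rin|rout] := boolP (0 <= r <= t0).
  have b1 := h1 r; have b2 := h2 r; rewrite in_itv /= rin in b1 b2.
  have := b1 isT; have := b2 isT => c3 c4.
  rewrite ler_norml; apply/andP; split; lra.
rewrite k0 ?normr0; last by move/idP; rewrite (negbTE rout).
lra.
Qed.

Lemma cm_le_norm (m : nat) (z : 'I_m -> cplx R) j :
  `|complex.Re (z j)| <= cmnorm z /\ `|complex.Im (z j)| <= cmnorm z.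
Proof.
rewrite /cmnorm.
have S : complex.Re (z j) ^+ 2 + complex.Im (z j) ^+ 2 <=
   \sum_(j0 < m) (complex.Re (z j0) ^+ 2 + complex.Im (z j0) ^+ 2).
  rewrite (bigD1 j)//= lerDl; apply: sumr_ge0 => i _.
  by apply: addr_ge0; apply: sqr_ge0.
have s1 := sqr_ge0 (complex.Re (z j)); have s2 := sqr_ge0 (complex.Im (z j)).
split; rewrite -sqrtr_sqr ler_sqrt ?(le_trans _ S)//; try lra.
all: apply: addr_ge0; apply: sqr_ge0.
Qed.

Lemma memLp_int (m : nat) (p a b : R) (f : R -> 'I_m -> cplx R) : 1 <= p ->
  memLp p (Icc a b) f -> forall j (bb : bool),
  mu.-integrable `[a, b] (EFin \o (fun s => if bb then complex.Re (f s j) else complex.Im (f s j))).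
Proof.
move=> p1 [mf fin] j bb; rewrite IccE in mf fin.
have mg : measurable_fun `[a, b] (fun s => if bb then complex.Re (f s j) else complex.Im (f s j)).
  by have [h1 h2] := mf j; case: bb.
apply/integrableP; split; first exact/measurable_EFinP.
have le1 : forall s, `|if bb then complex.Re (f s j) else complex.Im (f s j)| <=
    1 + cmnorm (f s) `^ p.
  move=> s; have [c1 c2] := cm_le_norm (f s) j.
  have : `|if bb then complex.Re (f s j) else complex.Im (f s j)| <= cmnorm (f s).
    by move: mg => _; case: bb.
  have n0 : 0 <= cmnorm (f s) by rewrite /cmnorm sqrtr_ge0.
  have [n1|n1] := leP (cmnorm (f s)) 1.
    by have := powR_ge0 (cmnorm (f s)) p; lra.
  have : cmnorm (f s) <= cmnorm (f s) `^ p.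
    by rewrite -{1}(powRr1 n0); apply: ler_powR => //; lra.
  by have := powR_ge0 (cmnorm (f s)) p; lra.
apply: (@le_lt_trans _ _ (\int[mu]_(s in `[a, b]) ((1 + cmnorm (f s) `^ p)%:E))%E).
  apply: ge0_le_integral => //.
  - apply: measurableT_comp => //; exact/measurable_EFinP.
  - apply/measurable_EFinP; apply: measurable_funD; first exact: measurable_cst.
    by apply/measurable_EFinP; exact: cm_meas_pow.
  - by move=> s _ /=; rewrite lee_fin.
under eq_integral do rewrite EFinD.
rewrite ge0_integralD//.
- rewrite lte_add_pinfty// integral_cst//.
  rewrite [X in (_ * X)%E]lebesgue_measure_itv/=; case: ifP => _; rewrite ?mule0 ?mul1e -?EFinD ?ltry//.
- by move=> s _; rewrite lee_fin powR_ge0.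
- exact: cm_meas_pow.
Qed.

End L.
Section C.
Context {R : realType}.

Definition cpt (b : bool) (z : cplx R) : R := if b then complex.Re z else complex.Im z.

Lemma cptD b (z w : cplx R) : cpt b (z + w) = cpt b z + cpt b w.
Proof. by case: b; case: z; case: w. Qed.
Lemma cptN b (z : cplx R) : cpt b (- z) = - cpt b z.
Proof. by case: b; case: z. Qed.
Lemma cptB b (z w : cplx R) : cpt b (z - w) = cpt b z - cpt b w.
Proof. by rewrite cptD cptN. Qed.
Lemma cpt0 b : cpt b (0 : cplx R) = 0.
Proof. by case: b. Qed.
Lemma cptM b (r : R) (z : cplx R) : cpt b (rC r * z) = r * cpt b z.
Proof. by case: b; case: z => x y /=; ring. Qed.
Lemma cpt_ext (z w : cplx R) : (forall b, cpt b z = cpt b w) -> z = w.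
Proof. by case: z => a b; case: w => c d H; have := H true; have := H false => /= -> ->. Qed.
Lemma cpt_cint m (D : set R) (f : R -> 'I_m -> cplx R) j b :
  cpt b (cintegral D f j) = \int[lebesgue_measure]_(s in D) cpt b (f s j).
Proof. by case: b. Qed.


Lemma is_derive_aff (W w : R -> R) (tau al be sg u : R) :
  (forall y : R, is_derive y 1 W (w y)) ->
  is_derive u 1 (fun s => sg * W (tau - (al + be * s)))
     (sg * (- be * w (tau - (al + be * u)))).
Proof.
move=> dW.
have dA : is_derive u 1 (fun s : R => tau - (al + be * s)) (- be).
  have h := is_deriveB (@is_derive_cst _ _ _ tau u 1)
    (is_deriveD (@is_derive_cst _ _ _ al u 1) (is_deriveZ be (@is_derive_id _ _ u 1))).
  have -> : (fun s : R => tau - (al + be * s)) = (cst tau - (cst al + be \*: id)) by apply/funext => s /=; rewrite /GRing.scale /=.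
  have -> : - be = (0 - (0 + be%:A) : R) by rewrite /GRing.scale /=; ring.
  exact: h.
have dWA := dW (tau - (al + be * u)).
have dc : derivable (W \o (fun s : R => tau - (al + be * s))) u 1.
  apply/derivable1_diffP; apply: differentiable_comp.
    by apply/derivable1_diffP; apply: ex_derive.
  by apply/derivable1_diffP; apply: ex_derive.
have := derivableP dc; rewrite -derive1E derive1_comp; [|exact: ex_derive|exact: ex_derive].
rewrite !derive1E (@derive_val _ _ _ _ _ _ _ dWA) (@derive_val _ _ _ _ _ _ _ dA).
move=> h; have h2 := is_deriveZ sg h.
have -> : (fun s : R => sg * W (tau - (al + be * s))) = sg \*: (W \o (fun s : R => tau - (al + be * s))) by [].
have -> : sg * (- be * w (tau - (al + be * u))) = sg *: (w (tau - (al + be * u)) * - be) by rewrite /GRing.scale /=; ring.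
exact: h2.
Qed.


Lemma cont_aff (k : R -> R) (tau al be sg : R) : continuous k ->
  continuous (fun s => sg * k (tau - (al + be * s))).
Proof.
move=> ck s; apply: cvgM; first exact: cvg_cst.
apply: continuous_comp; last exact: ck.
apply: cvgB; first exact: cvg_cst.
apply: cvgD; first exact: cvg_cst.
apply: cvgM; first exact: cvg_cst.
exact: cvg_id.
Qed.

Lemma meas_aff (D : set R) (k : R -> R) (tau al be sg : R) : continuous k ->
  measurable_fun D (fun s => sg * k (tau - (al + be * s))).
Proof.
move=> ck; apply: (measurable_funS measurableT (@subsetT _ D)).
exact: continuous_measurable_fun (cont_aff _ _ _ _ ck).
Qed.

Lemma unif_cont (w : R -> R) :
  (forall e : R, 0 < e -> exists2 d : R, 0 < d & forall a b : R,
     `|a - b| < d -> `|w a - w b| < e) -> continuous w.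
Proof.
move=> uw x; apply/cvgrPdist_lt => e e0; have [d d0 hd] := uw e e0.
apply/nbhs_ballP; exists d => // y; rewrite /ball /= => xy.
exact: hd.
Qed.

Lemma near_wd (D : set R) (t d : R) (P : R -> Prop) : 0 < d ->
  (forall t', t' != t -> `|t - t'| < d -> P t') ->
  \forall t' \near within D t^', P t'.
Proof.
move=> d0 H; rewrite /within /dnbhs /within /=.
apply/nbhs_ballP; exists d => // y; rewrite /ball /= => xy yt _.
exact: H.
Qed.

Lemma near_wn (D : set R) (t d : R) (P : R -> Prop) : 0 < d ->
  (forall t', `|t - t'| < d -> P t') ->
  \forall t' \near within D (nbhs t), P t'.
Proof.
move=> d0 H; rewrite /within /=.
apply/nbhs_ballP; exists d => // y; rewrite /ball /= => xy _.
exact: H.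
Qed.

End C.
Section M.
Context {R : realType}.
Notation mu := (@lebesgue_measure R).

Lemma Icc00 : Icc 0 0 = [set (0:R)].
Proof.
apply/seteqP; split=> x /=; rewrite /Icc /=.
  by move=> /andP[a b]; apply/eqP; rewrite eq_le a b.
by move=> ->; rewrite lexx.
Qed.

Lemma CL (g2 h1 h0 : R -> R) (t0 : R) : 0 <= t0 ->
  mu.-integrable `[0, t0] (EFin \o g2) ->
  (forall s, 0 <= s <= t0 -> h1 s = \int[mu]_(u in Icc 0 s) g2 u /\
                             h0 s = \int[mu]_(u in Icc 0 s) h1 u) ->
  h1 t0 = 0 -> h0 t0 = 0 ->
  [/\ forall y : R, is_derive y 1 (fun r => if 0 <= r <= t0 then h0 r else 0)
                       (if 0 <= y <= t0 then h1 y else 0),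
      (forall e : R, 0 < e -> exists2 d : R, 0 < d & forall a b : R,
         `|a - b| < d -> `|(if 0 <= a <= t0 then h1 a else 0) -
                          (if 0 <= b <= t0 then h1 b else 0)| < e) &
      forall y : R, y <= 0 -> (if 0 <= y <= t0 then h0 y else 0) = 0].
Proof.
move=> t00 ig H h1t0 h0t0.
set hh1 := fun r => if 0 <= r <= t0 then h1 r else 0.
set hh0 := fun r => if 0 <= r <= t0 then h0 r else 0.
have E1 : forall y, hh1 y = \int[mu]_(u in `]-oo, y]) (g2 \_ `[0, t0]) u.
  exact: (@hh_repr R g2 h1 t0 t00 (fun s hs => (H s hs).1) h1t0).
have E0 : forall y, hh0 y = \int[mu]_(u in `]-oo, y]) (h1 \_ `[0, t0]) u.
  exact: (@hh_repr R h1 h0 t0 t00 (fun s hs => (H s hs).2) h0t0).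
have U1 : forall e : R, 0 < e -> exists2 d : R, 0 < d & forall a b : R,
    `|a - b| < d -> `|hh1 a - hh1 b| < e.
  move=> e e0; have [d d0 hd] := hh_unif t0 ig e e0.
  by exists d => // a b ab; rewrite !E1; exact: hd.
split => //.
- move=> y.
  have C1 : continuous hh1 := @unif_cont R hh1 U1.
  have Z1 : forall r, ~ (0 <= r <= t0) -> hh1 r = 0.
    by move=> r /negP /negbTE hr; rewrite /hh1 hr.
  have P : h1 \_ `[0, t0] = hh1 \_ `[0, t0].
    apply/funext => r; rewrite !patchE; case: ifPn => //.
    by rewrite inE /= in_itv /= /hh1 => ->.
  have -> : hh0 = (fun y => \int[mu]_(u in `]-oo, y]) (hh1 \_ `[0, t0]) u).
    by apply/funext => r; rewrite E0 P.
  exact: (FTC_pt t0 y C1 Z1).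
- move=> y y0; rewrite /hh0.
  have [->|yn0] := eqVneq y 0.
    rewrite lexx t00 /= (H 0 _).2; last by rewrite lexx t00.
    by rewrite Icc00 Rintegral_set1.
  by rewrite ifF //; apply/negbTE; rewrite negb_and -ltNge lt_neqAle yn0 y0.
Qed.


Lemma bound_all (m : nat) (f : 'I_m -> bool -> R -> R) :
  (forall j b, exists M : R, forall r, `|f j b r| <= M) ->
  exists M : R, forall j b r, `|f j b r| <= M.
Proof.
move=> H.
have H' : forall j, \forall M \near +oo, forall b r, `|f j b r| <= M.
  move=> j; apply: filter_forall => b; have [M0 hM] := H j b.
  near=> M => r; apply: le_trans (hM r) _.
  by near: M; apply: nbhs_pinfty_ge; exact: num_real.
have [M hM] := filter_ex (filter_forall _ H').
by exists M => j b r; exact: hM.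
Unshelve. all: by end_near.
Qed.

Lemma le_sum_nonneg (m : nat) (F : 'I_m -> R) (j : 'I_m) :
  (forall i, 0 <= F i) -> F j <= \sum_(i < m) F i.
Proof.
move=> F0; rewrite (bigD1 j)//= lerDl; exact: sumr_ge0.
Qed.

Lemma PRIM (W w : R -> R) (tau al be sg s : R) :
  (forall y : R, is_derive y 1 W (w y)) -> continuous w -> 0 <= s ->
  sg * W (tau - (al + be * s)) = sg * W (tau - (al + be * 0)) +
    \int[mu]_(u in Icc 0 s) (sg * (- be * w (tau - (al + be * u)))).
Proof.
move=> dW cw; rewrite le_eqVlt => /predU1P[<-|s0].
  by rewrite Icc00 Rintegral_set1 addr0.
have cW : continuous W.
  move=> y; apply: differentiable_continuous; apply/derivable1_diffP.
  by have dWy := dW y; apply: ex_derive.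
set F := fun u => sg * W (tau - (al + be * u)).
set f := fun u => sg * (- be * w (tau - (al + be * u))).
have cF : continuous F by exact: cont_aff.
have cf : continuous f.
  have -> : f = fun u => (sg * - be) * w (tau - (al + be * u)).
    by apply/funext => u; rewrite /f mulrA.
  exact: cont_aff.
have dF : forall u : R, is_derive u 1 F (f u) by move=> u; exact: is_derive_aff.
have DF : derivable_oo_LRcontinuous F 0 s.
  split.
  + by move=> u _; have dFu := dF u; apply: ex_derive.
  + by apply: cvg_at_right_filter; exact: cF.
  + by apply: cvg_at_left_filter; exact: cF.
have Ff : {in `]0, s[, (F^`())%classic =1 f}.
  by move=> u _; rewrite derive1E; apply: derive_val.
have E := @continuous_FTC2 R f F 0 s s0 (continuous_subspaceT cf) DF Ff. rewrite IccE /Rintegral E /= -/(F s) -/(F 0); ring.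
Qed.

End M.

Unset Implicit Arguments.

Theorem lemma2p10 (R : realType) (m : nat) (p : R) (c : 'I_m -> R) (t0 : R)
  (v : R -> 'I_m -> cplx R) :
  1 <= p -> (forall j, c j != 0) ->
  0 < t0 -> (forall j, t0 <= `|c j|^-1) ->
  W2p0 p t0 v ->
  classical_solution p c t0 v (xsol c t0 v).
Proof.
move=> p1 c0 t00 tc [v1 [v2 [Hv2 [Hint [vt0 v1t0]]]]].
have t00' : 0 <= t0 := ltW t00.
have p0 : 0 <= p by lra.
pose W j b r := if 0 <= r <= t0 then cpt b (v r j) else 0.
pose w j b r := if 0 <= r <= t0 then cpt b (v1 r j) else 0.
have HC : forall j b, [/\ forall y : R, is_derive y 1 (W j b) (w j b y),
      (forall e : R, 0 < e -> exists2 d : R, 0 < d & forall a b0 : R,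
         `|a - b0| < d -> `|w j b a - w j b b0| < e) &
      forall y : R, y <= 0 -> W j b y = 0].
  move=> j b.
  apply: (@CL R (fun s => cpt b (v2 s j)) (fun s => cpt b (v1 s j))
     (fun s => cpt b (v s j)) t0 t00' (memLp_int p1 Hv2 j b)).
  - move=> s hs; have [e1 e2] := Hint s hs.
    by split; [rewrite e1|rewrite e2]; exact: cpt_cint.
  - by rewrite v1t0 /= cpt0.
  - by rewrite vt0 /= cpt0.
have dW : forall j b (y : R), is_derive y 1 (W j b) (w j b y).
  by move=> j b; case: (HC j b).
have uw : forall j b, (forall e : R, 0 < e -> exists2 d : R, 0 < d & forall a b0 : R,
         `|a - b0| < d -> `|w j b a - w j b b0| < e).
  by move=> j b; case: (HC j b).
have W0 : forall j b (y : R), y <= 0 -> W j b y = 0.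
  by move=> j b; case: (HC j b).
have cw : forall j b, continuous (w j b) by move=> j b; exact: unif_cont (uw j b).
have cW : forall j b, continuous (W j b).
  move=> j b y; apply: differentiable_continuous; apply/derivable1_diffP.
  by have dWy := dW j b y; apply: ex_derive.
have [MW hMW] : exists M : R, forall j b r, `|W j b r| <= M.
  apply: bound_all => j b; apply: (bounded_ext t0 t00' (cW j b)).
  by move=> r /negP /negbTE hr; rewrite /W hr.
have [Mw hMw] : exists M : R, forall j b r, `|w j b r| <= M.
  apply: bound_all => j b; apply: (bounded_ext t0 t00' (cw j b)).
  by move=> r /negP /negbTE hr; rewrite /w hr.
pose sg j : R := if 0 < c j then 1 else -1.
pose al j : R := if 0 < c j then `|c j|^-1 else 0.
pose be j : R := if 0 < c j then - `|c j|^-1 else `|c j|^-1.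
pose G (t s : R) j := rC (`|c j|^-1) *
  (if 0 <= t - (al j + be j * s) <= t0 then v1 (t - (al j + be j * s)) j else 0).
have Wv : forall j b r, cpt b (vhat t0 v r j) = W j b r.
  by move=> j b r; rewrite /vhat /W; case: ifP => _ //; rewrite cpt0.
have K1 : forall t s j b, cpt b (xsol c t0 v t s j) = sg j * W j b (t - (al j + be j * s)).
  move=> t s j b; rewrite /xsol /sg /al /be; have := c0 j.
  case: ltgtP => // cj _.
    rewrite cptB cpt0 subr0 mul1r Wv; congr W; ring.
  rewrite cptB cpt0 sub0r Wv mulN1r; congr (- _); congr W; ring.
have V1c : forall j b r, cpt b (if 0 <= r <= t0 then v1 r j else 0) = w j b r.
  by move=> j b r; rewrite /w; case: ifP => _ //; rewrite cpt0.
have Gc : forall t s j b, cpt b (G t s j) = `|c j|^-1 * w j b (t - (al j + be j * s)).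
  move=> t s j b; rewrite cptM /w; case: ifP => _ //; by rewrite cpt0.
have K2 : forall j, sg j * (- be j) = `|c j|^-1.
  by move=> j; rewrite /sg /be; case: ifP => _; ring.
have K3 : forall j, c j * `|c j|^-1 = sg j.
  move=> j; rewrite /sg; have := c0 j; case: ltgtP => // cj _.
    by rewrite gtr0_norm// mulfV// gt_eqF.
  by rewrite ltr0_norm// invrN mulrN mulfV// lt_eqF.
have sg1 : forall j, `|sg j| = 1.
  by move=> j; rewrite /sg; case: ifP => _; rewrite ?normrN normr1.
have K5 : forall j s, 0 <= s <= 1 -> 0 <= al j + be j * s.
  move=> j s /andP[s0 s1]; have ci : 0 <= `|c j|^-1 by rewrite invr_ge0.
  rewrite /al /be; case: ifP => _; nra.
have mLp : forall (f : R -> 'I_m -> cplx R) (K : 'I_m -> bool -> R -> R)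
    (A : 'I_m -> R) (tau MA M : R), 0 <= MA -> 0 <= M ->
    (forall j b, continuous (K j b)) -> (forall j b r, `|K j b r| <= M) ->
    (forall j, `|A j| <= MA) ->
    (forall s j b, cpt b (f s j) = A j * K j b (tau - (al j + be j * s))) ->
    memLp p (Icc 0 1) f.
  move=> f K A tau MA M MA0 M0 cK bK bA fE.
  have mf : cm_measurable (Icc 0 1) f.
    move=> j; split.
    + have -> : (fun s => complex.Re (f s j)) =
          fun s => A j * K j true (tau - (al j + be j * s)).
        by apply/funext => s; exact: (fE s j true).
      exact: meas_aff.
    + have -> : (fun s => complex.Im (f s j)) =
          fun s => A j * K j false (tau - (al j + be j * s)).
        by apply/funext => s; exact: (fE s j false).
      exact: meas_aff.
  split => //.
  have hbd : forall s, Icc 0 1 s -> forall j,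
      `|complex.Re (f s j)| <= MA * M /\ `|complex.Im (f s j)| <= MA * M.
    move=> s _ j.
    have h : forall b, `|cpt b (f s j)| <= MA * M.
      by move=> b; rewrite fE normrM; apply: ler_pM.
    exact: (conj (h true) (h false)).
  have /andP[_ hb] := Lp_bound p (MA * M) p0 (mulr_ge0 MA0 M0) mf hbd.
  exact: le_lt_trans hb (ltry _).
have MW0 : forall j b r, `|W j b r| <= `|MW|.
  by move=> j b r; apply: le_trans (hMW j b r) (ler_norm _).
have Mw0 : forall j b r, `|w j b r| <= `|Mw|.
  by move=> j b r; apply: le_trans (hMw j b r) (ler_norm _).
have S0 : 0 <= \sum_(i < m) `|c i|^-1 by apply: sumr_ge0 => i _; rewrite invr_ge0.
split.
  have sgle : forall j, `|sg j| <= 1 by move=> j; rewrite sg1.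
  move=> t _; exact: (mLp _ W sg t 1 `|MW| ler01 (normr_ge0 _) cW MW0 sgle
     (fun s j b => K1 t s j b)).
exists (xsol c t0 v), G.
split; [|split; [|split; [|split]]].
- move=> t ht; split; [|split].
  + have cle : forall j, `| `|c j|^-1 | <= \sum_(i < m) `|c i|^-1.
      move=> j; rewrite ger0_norm ?invr_ge0//; apply: le_sum_nonneg => i.
      by rewrite invr_ge0.
    exact: (mLp _ w (fun j => `|c j|^-1) t (\sum_(i < m) `|c i|^-1) `|Mw|
      S0 (normr_ge0 _) cw Mw0 cle (fun s j b => Gc t s j b)).
  + move=> s /andP[s0 s1]; apply/funext => j; apply: cpt_ext => b.
    rewrite cptD cpt_cint !K1.
    rewrite (@PRIM R (W j b) (w j b) t (al j) (be j) (sg j) s (dW j b) (cw j b) s0).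
    congr (_ + _); apply: eq_Rintegral => u _; by rewrite Gc -(K2 j) mulrA.
  + by apply: aeW => s _.
- move=> t ht.
  pose f := fun t' s j => rC (t' - t)^-1 * (xsol c t0 v t' s j - xsol c t0 v t s j)
     - rC (c j) * G t s j.
  apply: (@Lp_cvg0 R m p _ _ f p1).
  + apply: nearW => t' j.
    have E : forall b, measurable_fun (Icc 0 1) (fun s => cpt b (f t' s j)).
      move=> b.
      have -> : (fun s => cpt b (f t' s j)) = fun s =>
         ((t' - t)^-1 * sg j) * W j b (t' - (al j + be j * s)) +
         ((- ((t' - t)^-1 * sg j)) * W j b (t - (al j + be j * s)) +
          (- (c j * `|c j|^-1)) * w j b (t - (al j + be j * s))).
        by apply/funext => s; rewrite /f cptB !cptM cptB !K1 !V1c; ring.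
      apply: measurable_funD; first exact: meas_aff.
      by apply: measurable_funD; exact: meas_aff.
    exact: (conj (E true) (E false)).
  + move=> e e0.
    have H : forall j b, \forall t' \near within (Icc 0 t0) t^',
        forall s, Icc 0 1 s -> `|cpt b (f t' s j)| <= e.
      move=> j b; have [d d0 hd] := dq_est (w j b) (dW j b) (uw j b) e e0.
      apply: (@near_wd R _ t d _ d0) => t' t't tt' s _.
      have -> : cpt b (f t' s j) = sg j * ((t' - t)^-1 *
          (W j b ((t - (al j + be j * s)) + (t' - t)) - W j b (t - (al j + be j * s)))
          - w j b (t - (al j + be j * s))).
        rewrite /f cptB !cptM cptB !K1 !V1c mulrA K3.
        have -> : t - (al j + be j * s) + (t' - t) = t' - (al j + be j * s) by ring.
        ring.
      rewrite normrM sg1 mul1r; apply: hd; first by rewrite subr_eq0.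
      by rewrite distrC.
    apply: filterS (filter_forall _ (fun j => filter_forall _ (H j))).
    move=> t' Ht' s hs j.
    exact: (conj (Ht' j true s hs) (Ht' j false s hs)).
- move=> t ht.
  pose f := fun t' s j => rC (c j) * G t' s j - rC (c j) * G t s j.
  apply: (@Lp_cvg0 R m p _ _ f p1).
  + apply: nearW => t' j.
    have E : forall b, measurable_fun (Icc 0 1) (fun s => cpt b (f t' s j)).
      move=> b.
      have -> : (fun s => cpt b (f t' s j)) = fun s =>
         (c j * `|c j|^-1) * w j b (t' - (al j + be j * s)) +
         (- (c j * `|c j|^-1)) * w j b (t - (al j + be j * s)).
        by apply/funext => s; rewrite /f cptB !cptM !V1c; ring.
      by apply: measurable_funD; exact: meas_aff.
    exact: (conj (E true) (E false)).
  + move=> e e0.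
    have H : forall j b, \forall t' \near within (Icc 0 t0) (nbhs t),
        forall s, Icc 0 1 s -> `|cpt b (f t' s j)| <= e.
      move=> j b; have [d d0 hd] := uw j b e e0.
      apply: (@near_wn R _ t d _ d0) => t' tt' s _.
      have -> : cpt b (f t' s j) = sg j * (w j b (t' - (al j + be j * s))
          - w j b (t - (al j + be j * s))).
        by rewrite /f cptB !cptM !V1c !mulrA K3; ring.
      rewrite normrM sg1 mul1r; apply: ltW; apply: hd.
      have -> : t' - (al j + be j * s) - (t - (al j + be j * s)) = t' - t by ring.
      by rewrite distrC.
    apply: filterS (filter_forall _ (fun j => filter_forall _ (H j))).
    move=> t' Ht' s hs j.
    exact: (conj (Ht' j true s hs) (Ht' j false s hs)).
- move=> t /andP[tp tt0]; apply/funext => j; apply: cpt_ext => b.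
  rewrite cptB !K1 /sg /al /be; have := c0 j; have := tc j.
  case: ltgtP => // cj tcj _.
    rewrite (W0 j b (t - (`|c j|^-1 + - `|c j|^-1 * 0))); last by rewrite mulr0 addr0; lra.
    have -> : t - (`|c j|^-1 + - `|c j|^-1 * 1) = t by ring.
    by rewrite /W tp tt0 /=; ring.
  rewrite (W0 j b (t - (0 + `|c j|^-1 * 1))); last by rewrite mulr1 add0r; lra.
  have -> : t - (0 + `|c j|^-1 * 0) = t by ring.
  by rewrite /W tp tt0 /=; ring.
- rewrite /Lp_pow (eq_integral (fun _ => 0%E)); first exact: integral0.
  move=> s; rewrite inE => hs.
  have z : forall j b, cpt b (xsol c t0 v 0 s j) = 0.
    move=> j b; rewrite K1 W0 ?mulr0//; have := K5 j s hs; lra.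
  rewrite /cmnorm big1 ?sqrtr0 ?powR0//.
    by apply/eqP => p00; move: p1; rewrite p00; lra.
  move=> j _; have := z j true; have := z j false; rewrite /cpt => -> ->.
  by rewrite expr0n /= addr0.
Qed.
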